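(* Let $H$ be a dense 3-graph and $T$ a triangle. Then $H$ is forbidden for $T$ if and only if $H$ is exactly forbidden for $T$.
   Context: A 3-graph is a 3-uniform hypergraph. For a 3-graph $G$ and a 3-graph $F$, $G$ is $F$-free if it has no (not necessarily induced) subhypergraph isomorphic to $F$. Let $T$ be a triangle with side lengths $a,b,c$, $\varepsilon>0$, $\varepsilon'=\varepsilon\min\{a,b,c\}$; a triangle $A'B'C'$ is $\varepsilon$-congruent to $T$ if there are $A,B,C\in\mathbb{R}^2$ with $ABC$ congruent to $T$ and $A',B',C'$ within distance $\varepsilon'$ of $A,B,C$ respectively. For finite $P\subseteq\mathbb{R}^2$, $\mathcal{H}(T,P,\varepsilon)$ is the 3-graph with vertex set $P$ whose edges are the triples forming triangles $\varepsilon$-congruent to $T$. A 3-graph $H$ is forbidden for $T$ if there exists $\varepsilon>0$ such that for every point set $P\subseteq\mathbb{R}^2$ with $|P|=|V(H)|$, $\mathcal{H}(T,P,\varepsilon)$ is $H$-free. A 3-graph $H$ with vertex set $[k]$ is exactly forbidden for $T$ if there do not exist points $p_1,\dots,p_k\in\mathbb{R}^2$ (not necessarily distinct) such that for every edge $xyz\in E(H)$ the triangle $p_xp_yp_z$ is congruent to $T$. A 3-graph $H$ on $k$ vertices is dense if there is an ordering $v_1,\dots,v_k$ of its vertices such that for every $3\le i\le k$ there is an edge of $H[\{v_1,\dots,v_i\}]$ containing $v_i$. *)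

(* Defs.v *)
From HB Require Import structures.
From mathcomp Require Import all_boot all_order all_algebra.
From mathcomp Require Import reals.
From mathcomp Require Import finmap.
Set Implicit Arguments. Unset Strict Implicit. Unset Printing Implicit Defensive.
Import Order.TTheory GRing.Theory Num.Theory.
Local Open Scope ring_scope.
Local Open Scope fset_scope.

Section Geo.
Variable R : realType.

Definition point := (R * R)%type.

Definition dist (p q : point) : R :=
  Num.sqrt ((p.1 - q.1) ^+ 2 + (p.2 - q.2) ^+ 2).

(* T is the triangle with side lengths a, b, c; a fixed labelling:
   |AB| = a, |BC| = b, |CA| = c. *)
Definition cong_ord (a b c : R) (A B C : point) : Prop :=
  dist A B = a /\ dist B C = b /\ dist C A = c.

(* triangle ABC (vertices unordered) is congruent to T (SSS) *)
Definition tri_cong (a b c : R) (A B C : point) : Prop :=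
  cong_ord a b c A B C \/ cong_ord a b c A C B \/ cong_ord a b c B A C \/
  cong_ord a b c B C A \/ cong_ord a b c C A B \/ cong_ord a b c C B A.

Definition eps_cong (a b c eps : R) (A' B' C' : point) : Prop :=
  let eps' := eps * Num.min a (Num.min b c) in
  exists A B C : point, tri_cong a b c A B C /\
    dist A' A <= eps' /\ dist B' B <= eps' /\ dist C' C <= eps'.

(* edges of H(T,P,eps): vertex set is (the finite type of elements of) P *)
Definition geom_edge (a b c eps : R) (P : {fset point}) (e : {set P}) : Prop :=
  exists p q r : P, [/\ p != q, q != r, p != r, e = [set p; q; r] &
    eps_cong a b c eps (val p) (val q) (val r)].

(* G (vertex type W, edge predicate EG) contains a (not necessarily induced)
   copy of H (vertex type V, edge set EH) *)
Definition contains_copy (V W : finType) (EH : {set {set V}})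
  (EG : {set W} -> Prop) : Prop :=
  exists f : V -> W, injective f /\ forall e, e \in EH -> EG (f @: e).

Definition forbidden (a b c : R) (V : finType) (E : {set {set V}}) : Prop :=
  exists eps : R, 0 < eps /\
    forall P : {fset point}, #|` P| = #|V| ->
      ~ contains_copy E (geom_edge a b c eps (P := P)).

Definition exactly_forbidden (a b c : R) (V : finType) (E : {set {set V}})
  : Prop :=
  ~ exists p : V -> point, forall e, e \in E ->
      exists x y z : V, e = [set x; y; z] /\ tri_cong a b c (p x) (p y) (p z).

End Geo.

Definition dense (V : finType) (E : {set {set V}}) : Prop :=
  exists s : seq V, [/\ uniq s, forall v, v \in s &
    forall (x0 : V) (i : nat), (2 <= i < size s)%N ->
      exists2 e, e \in E &
        nth x0 s i \in e /\
        e \subset [set x | (index x s <= i)%N]].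

(* Main.v *)
Require Import Defs.
From HB Require Import structures.
From mathcomp Require Import all_boot all_order all_algebra.
From mathcomp Require Import reals.
From mathcomp Require Import finmap.
From mathcomp Require Import ring lra zify.
From mathcomp Require all_classical all_analysis.
From Stdlib Require Import Classical.
Import Order.TTheory GRing.Theory Num.Theory.
Local Open Scope ring_scope.
Module BW.
Import all_classical all_analysis.
Local Open Scope ring_scope.
Lemma bw1 (R : realType) (u : nat -> R) (M : R) :
  (forall n, `|u n| <= M) ->
  exists (psi : nat -> nat) (l : R), (forall n, (n <= psi n)%N) /\
    forall r, 0 < r -> exists N, forall n, (N <= n)%N -> `|u (psi n) - l| < r.
Proof.
move=> HM.
have bnd : bounded_fun u.
  exists M; split; first exact: num_real.
  by move=> x Mx n _; apply: le_trans (HM n) _; apply: ltW.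
have [f finc fl] := bolzano_weierstrass bnd. set l := lim _ in fl.
exists f, l; split.
  elim=> [|n IH]; first by [].
  have: (f n < f n.+1)%N.
    by rewrite ltnNge; have := finc n.+1 n; rewrite !leEnat => ->; rewrite ltnn.
  by apply: leq_trans.
move=> r r0; move/cvgrPdist_lt : fl => /(_ r r0).
case=> N _ HN; exists N => n Nn.
by rewrite distrC; apply: HN.
Qed.
End BW.

Lemma bwN (R : realType) (T : finType) (u : T -> nat -> R) (M : R) :
  (forall i n, `|u i n| <= M) ->
  exists (phi : nat -> nat) (l : T -> R), (forall n, (n <= phi n)%N) /\
    forall r, 0 < r -> exists N, forall n, (N <= n)%N -> forall i, `|u i (phi n) - l i| < r.
Proof.
move=> HM.
suff : forall s : seq T, exists (phi : nat -> nat) (l : T -> R), (forall n, (n <= phi n)%N) /\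
    forall r, 0 < r -> exists N, forall n, (N <= n)%N -> forall i, i \in s -> `|u i (phi n) - l i| < r.
  case/(_ (enum T)) => phi [l [h1 h2]]; exists phi, l; split=> // r r0.
  by have [N HN] := h2 r r0; exists N => n Nn i; apply: HN; rewrite ?mem_enum.
elim=> [|i s [phi [l [h1 h2]]]].
  by exists id, (fun _ => 0); split=> // r r0; exists 0%N.
have [psi [li [p1 p2]]] := @BW.bw1 R (fun n => u i (phi n)) M (fun n => HM i (phi n)).
exists (phi \o psi), (fun j => if j == i then li else l j); split.
  by move=> n /=; apply: leq_trans (p1 n) (h1 _).
move=> r r0; have [N1 HN1] := h2 r r0; have [N2 HN2] := p2 r r0.
exists (maxn N1 N2) => n Nn j; rewrite inE => /orP [/eqP ->|js].
  by rewrite eqxx; apply: HN2; apply: leq_trans Nn; rewrite leq_maxr.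
case: eqP => [->|_]; first by apply: HN2; apply: leq_trans Nn; rewrite leq_maxr.
apply: HN1 => //.
apply: leq_trans _ (p1 n); apply: leq_trans _ Nn; exact: leq_maxl.
Qed.

Set Implicit Arguments. Unset Strict Implicit.


Lemma dist_ge0 {R : realType} (p q : point R) : 0 <= dist p q.
Proof. exact: sqrtr_ge0. Qed.

Lemma dist_sym {R : realType} (p q : point R) : dist p q = dist q p.
Proof. by rewrite /dist; congr Num.sqrt; ring. Qed.

Lemma dist_tri {R : realType} (p q r : point R) : dist p r <= dist p q + dist q r.
Proof.
rewrite /dist.
set u1 := p.1 - q.1; set u2 := p.2 - q.2; set v1 := q.1 - r.1; set v2 := q.2 - r.2.
have -> : p.1 - r.1 = u1 + v1 by rewrite /u1 /v1; ring.
have -> : p.2 - r.2 = u2 + v2 by rewrite /u2 /v2; ring.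
set A := u1 ^+ 2 + u2 ^+ 2; set B := v1 ^+ 2 + v2 ^+ 2.
have P0 : 0 <= A by rewrite /A; nra.
have Q0 : 0 <= B by rewrite /B; nra.
have X0 := sqrtr_ge0 A; have Y0 := sqrtr_ge0 B.
have XX := sqr_sqrtr P0; have YY := sqr_sqrtr Q0.
have XY : u1 * v1 + u2 * v2 <= Num.sqrt A * Num.sqrt B.
  have H : (u1 * v1 + u2 * v2) ^+ 2 <= (Num.sqrt A * Num.sqrt B) ^+ 2.
    rewrite exprMn XX YY /A /B -subr_ge0.
    have -> : (u1 ^+ 2 + u2 ^+ 2) * (v1 ^+ 2 + v2 ^+ 2) - (u1 * v1 + u2 * v2) ^+ 2
      = (u1 * v2 - u2 * v1) ^+ 2 by ring.
    exact: sqr_ge0.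
  have PQ : 0 <= Num.sqrt A * Num.sqrt B by apply: mulr_ge0.
  nra.
rewrite -[Num.sqrt A + _]ger0_norm ?addr_ge0 // -sqrtr_sqr ler_wsqrtr //.
rewrite [X in _ <= X]sqrrD XX YY /A /B; nra.
Qed.

Definition acong {R : realType} (a b c r : R) (A B C : point R) : Prop :=
  `|dist A B - a| <= r /\ `|dist B C - b| <= r /\ `|dist C A - c| <= r.

Definition atri {R : realType} (a b c r : R) (A B C : point R) : Prop :=
  acong a b c r A B C \/ acong a b c r A C B \/ acong a b c r B A C \/
  acong a b c r B C A \/ acong a b c r C A B \/ acong a b c r C B A.

Lemma dist_diff {R : realType} (A' B' A B : point R) :
  `|dist A' B' - dist A B| <= dist A' A + dist B' B.
Proof.
have h1 := dist_tri A' A B'; have h2 := dist_tri A B B'.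
have h3 := dist_tri A A' B; have h4 := dist_tri A' B' B.
rewrite (dist_sym B B') in h2; rewrite (dist_sym A A') in h3.
rewrite ler_norml; apply/andP; split; lra.
Qed.

Lemma norm_move {R : realType} (x y a r d : R) :
  `|x - y| <= d -> `|y - a| <= r -> `|x - a| <= r + d.
Proof.
move=> h1 h2; have -> : x - a = (x - y) + (y - a) by ring.
apply: le_trans (ler_normD _ _) _; lra.
Qed.

Lemma acong_move {R : realType} (a b c r d : R) (A B C A' B' C' : point R) :
  acong a b c r A B C -> dist A' A <= d -> dist B' B <= d -> dist C' C <= d ->
  acong a b c (r + 2 * d) A' B' C'.
Proof.
move=> [h1 [h2 h3]] dA dB dC; split; [|split].
- apply: norm_move h1; apply: le_trans (dist_diff _ _ _ _) _; lra.
- apply: norm_move h2; apply: le_trans (dist_diff _ _ _ _) _; lra.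
- apply: norm_move h3; apply: le_trans (dist_diff _ _ _ _) _; lra.
Qed.

Lemma acong_mono {R : realType} (a b c r r' : R) (A B C : point R) :
  r <= r' -> acong a b c r A B C -> acong a b c r' A B C.
Proof. by move=> rr [h1 [h2 h3]]; split; [|split]; apply: le_trans rr. Qed.

Lemma atri_mono {R : realType} (a b c r r' : R) (A B C : point R) :
  r <= r' -> atri a b c r A B C -> atri a b c r' A B C.
Proof.
move=> rr; case=> [h|[h|[h|[h|[h|h]]]]]; move: (acong_mono rr h) => h'; rewrite /atri; tauto.
Qed.

Lemma atri_move {R : realType} (a b c r d : R) (A B C A' B' C' : point R) :
  atri a b c r A B C -> dist A' A <= d -> dist B' B <= d -> dist C' C <= d ->
  atri a b c (r + 2 * d) A' B' C'.
Proof.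
move=> h dA dB dC; rewrite /atri.
case: h => [h|[h|[h|[h|[h|h]]]]].
- by left; apply: acong_move h dA dB dC.
- by right; left; apply: acong_move h dA dC dB.
- by right; right; left; apply: acong_move h dB dA dC.
- by right; right; right; left; apply: acong_move h dB dC dA.
- by right; right; right; right; left; apply: acong_move h dC dA dB.
- by right; right; right; right; right; apply: acong_move h dC dB dA.
Qed.

Lemma cong_acong {R : realType} (a b c : R) (A B C : point R) :
  cong_ord a b c A B C -> acong a b c 0 A B C.
Proof. by move=> [h1 [h2 h3]]; rewrite /acong h1 h2 h3 !subrr normr0. Qed.

Lemma tri_atri {R : realType} (a b c : R) (A B C : point R) :
  tri_cong a b c A B C -> atri a b c 0 A B C.
Proof.
by case=> [h|[h|[h|[h|[h|h]]]]]; move: (cong_acong h) => h'; rewrite /atri; tauto.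
Qed.

Lemma eps_cong_atri {R : realType} (a b c eps : R) (A' B' C' : point R) :
  eps_cong a b c eps A' B' C' ->
  atri a b c (2 * (eps * Num.min a (Num.min b c))) A' B' C'.
Proof.
move=> [A [B [C [hT [dA [dB dC]]]]]].
have := atri_move (tri_atri hT) dA dB dC; by rewrite add0r.
Qed.

Lemma norm_small0 {R : realType} (x : R) : (forall r, 0 < r -> `|x| <= r) -> x = 0.
Proof.
move=> h; apply/eqP; apply/negPn/negP => x0.
have hx : 0 < `|x| by rewrite normr_gt0.
have := h (`|x| / 2) (divr_gt0 hx (ltr0Sn _ 1)); lra.
Qed.

Lemma acong_cong {R : realType} (a b c : R) (A B C : point R) :
  acong a b c 0 A B C -> cong_ord a b c A B C.
Proof.
move=> [h1 [h2 h3]]; split; [|split]; apply/eqP; rewrite -subr_eq0; apply/eqP;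
  apply/normr0_eq0/le_anti; rewrite normr_ge0 andbT //.
Qed.

Lemma min0 {R : realType} (x y : R) : Num.min x y = 0 -> x = 0 \/ y = 0.
Proof.
by case: leP => h; tauto.
Qed.

Lemma atri_tri {R : realType} (a b c : R) (A B C : point R) :
  (forall r, 0 < r -> atri a b c r A B C) -> tri_cong a b c A B C.
Proof.
move=> h.
pose m A B C := Num.max `|dist A B - a| (Num.max `|dist B C - b| `|dist C A - c|).
have acm P0 Q0 S0 r : acong a b c r P0 Q0 S0 -> m P0 Q0 S0 <= r.
  by move=> [h1 [h2 h3]]; rewrite /m !ge_max h1 h2 h3.
have mca P0 Q0 S0 : m P0 Q0 S0 = 0 -> cong_ord a b c P0 Q0 S0.
  move=> e0; apply: acong_cong; rewrite -e0 /m; split; [|split];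
  by rewrite !le_max lexx ?orbT.
have m0 : forall X Y Z, 0 <= m X Y Z by move=> X Y Z; rewrite /m le_max normr_ge0.
pose mm := Num.min (m A B C) (Num.min (m A C B) (Num.min (m B A C)
            (Num.min (m B C A) (Num.min (m C A B) (m C B A))))).
have mm0 : mm = 0.
  apply: norm_small0 => r r0.
  have mmge : 0 <= mm by rewrite /mm !le_min !m0.
  rewrite ger0_norm //.
  case: (h r r0) => [e|[e|[e|[e|[e|e]]]]]; move/acm: e => e; apply: le_trans e;
    rewrite /mm !ge_min lexx ?orbT //.
have : m A B C = 0 \/ m A C B = 0 \/ m B A C = 0 \/ m B C A = 0 \/ m C A B = 0 \/ m C B A = 0.
  move: mm0; rewrite /mm.
  by do 5 (move/min0 => [->|]; [tauto|]); tauto.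
case=> [e|[e|[e|[e|[e|e]]]]]; move/mca: e => e; rewrite /tri_cong; tauto.
Qed.

Lemma tri_swap12 {R : realType} (a b c : R) (A B C : point R) :
  tri_cong a b c A B C -> tri_cong a b c B A C.
Proof. by rewrite /tri_cong; tauto. Qed.

Lemma tri_swap23 {R : realType} (a b c : R) (A B C : point R) :
  tri_cong a b c A B C -> tri_cong a b c A C B.
Proof. by rewrite /tri_cong; tauto. Qed.

Lemma eps_swap12 {R : realType} (a b c e : R) (A B C : point R) :
  eps_cong a b c e A B C -> eps_cong a b c e B A C.
Proof.
move=> [A0 [B0 [C0 [h [dA [dB dC]]]]]]; exists B0, A0, C0; split; first exact: tri_swap12.
tauto.
Qed.

Lemma eps_swap23 {R : realType} (a b c e : R) (A B C : point R) :
  eps_cong a b c e A B C -> eps_cong a b c e A C B.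
Proof.
move=> [A0 [B0 [C0 [h [dA [dB dC]]]]]]; exists A0, C0, B0; split; first exact: tri_swap23.
tauto.
Qed.

Lemma perm3 (X : eqType) (Q : X -> X -> X -> Prop) :
  (forall x y z, Q x y z -> Q y x z) -> (forall x y z, Q x y z -> Q x z y) ->
  forall x y z x' y' z', x' != y' -> y' != z' -> x' != z' ->
  x' \in [:: x; y; z] -> y' \in [:: x; y; z] -> z' \in [:: x; y; z] ->
  Q x y z -> Q x' y' z'.
Proof.
move=> s12 s23 x y z x' y' z' n1 n2 n3 h1 h2 h3; move: n1 n2 n3.
move: h1 h2 h3; rewrite !inE.
move=> /or3P [] /eqP -> /or3P [] /eqP -> /or3P [] /eqP -> n1 n2 n3 q.
all: try by rewrite eqxx in n1.
all: try by rewrite eqxx in n2.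
all: try by rewrite eqxx in n3.
- exact: q.
- by apply s23.
- by apply s12.
- by apply s23; apply s12.
- by apply s12; apply s23.
- by apply s12; apply s23; apply s12.
Qed.

Definition tr {R : realType} (o p : point R) : point R := (p.1 - o.1, p.2 - o.2).

Lemma dist_tr {R : realType} (o p q : point R) : dist (tr o p) (tr o q) = dist p q.
Proof. by rewrite /dist /tr /=; congr Num.sqrt; ring. Qed.

Lemma eps_tr {R : realType} (a b c e : R) (o A B C : point R) :
  eps_cong a b c e A B C -> eps_cong a b c e (tr o A) (tr o B) (tr o C).
Proof.
move=> [A0 [B0 [C0 [h [dA [dB dC]]]]]]; exists (tr o A0), (tr o B0), (tr o C0).
by move: h; rewrite /tri_cong /cong_ord !dist_tr.
Qed.

Lemma coord1_le {R : realType} (p q : point R) : `|p.1 - q.1| <= dist p q.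
Proof. by rewrite -sqrtr_sqr ler_wsqrtr // lerDl sqr_ge0. Qed.

Lemma coord2_le {R : realType} (p q : point R) : `|p.2 - q.2| <= dist p q.
Proof. by rewrite -sqrtr_sqr ler_wsqrtr // lerDr sqr_ge0. Qed.

Lemma dist_le_coords {R : realType} (p q : point R) :
  dist p q <= `|p.1 - q.1| + `|p.2 - q.2|.
Proof.
rewrite -[_ + _]ger0_norm ?addr_ge0 // -sqrtr_sqr ler_wsqrtr //.
rewrite [X in _ <= X]sqrrD !real_normK ?num_real //.
have := normr_ge0 (p.1 - q.1); have := normr_ge0 (p.2 - q.2); nra.
Qed.

Lemma card3_distinct (V : finType) (x y z : V) :
  #|[set x; y; z]| = 3%N -> [/\ x != y, y != z & x != z].
Proof.
move=> h; split; apply/negP => /eqP e; subst.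
- have : (#|[set y; y; z]| <= 2)%N by rewrite setUid cards2; case: (y != z).
  by rewrite h.
- have : (#|[set x; z; z]| <= 2)%N by rewrite -setUA setUid cards2; case: (x != z).
  by rewrite h.
- have : (#|[set z; y; z]| <= 2)%N.
    by rewrite setUAC setUid cards2; case: (z != y).
  by rewrite h.
Qed.

Lemma close_contra {R : realType} (x y G : R) :
  0 <= x -> x < G -> 0 <= y -> y < G -> G <= `|x - y| -> False.
Proof. by move=> h1 h2 h3 h4; rewrite ler_normr => /orP [] ?; lra. Qed.

Lemma forb_exact (R : realType) (a b c : R) (V : finType) (E : {set {set V}})
  (Ha : 0 < a) (Hb : 0 < b) (Hc : 0 < c)
  (HE : forall e, e \in E -> #|e| = 3%N) :
  forbidden a b c E -> exactly_forbidden a b c E.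
Proof.
move=> [eps [eps0 Hf]] [p Hp].
set m := Num.min a (Num.min b c).
have m0 : 0 < m by rewrite /m !lt_min Ha Hb Hc.
set d := eps * m.
have d0 : 0 < d by apply: mulr_gt0.
set k : V -> nat := fun v => enum_rank v.
set N := #|V|.
have kN v : (k v < N)%N by rewrite /k /N; case: (enum_rank v) => /= i; rewrite cardE.
set g := \big[Num.min/1]_(vw : V * V | (p vw.1).1 != (p vw.2).1) `|(p vw.1).1 - (p vw.2).1|.
have g0 : 0 < g.
  rewrite /g; apply: (big_ind (fun x => 0 < x)) => //.
    by move=> x y x0 y0; rewrite lt_min x0 y0.
  by move=> vw ne; rewrite normr_gt0 subr_eq0.
have gle v w : (p v).1 != (p w).1 -> g <= `|(p v).1 - (p w).1|.
  by move=> ne; rewrite /g (bigD1 (v, w)) //= ge_min lexx.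
set t := Num.min d g / (N%:R + 1).
have mdg0 : 0 < Num.min d g by rewrite lt_min d0 g0.
have t0 : 0 < t by apply: divr_gt0 => //; rewrite ltr_wpDl.
have tk v : 0 <= t * (k v)%:R < Num.min d g.
  apply/andP; split; first by rewrite mulr_ge0 // ltW.
  have : (k v)%:R < N%:R + 1 :> R.
    by rewrite (_ : 1 = 1%:R) // -natrD ltr_nat addn1 ltnS ltnW.
  rewrite /t => hk; rewrite mulrAC ltr_pdivrMr ?ltr_wpDl //.
  by rewrite ltr_pM2l.
set q : V -> point R := fun v => ((p v).1 + t * (k v)%:R, (p v).2).
have qinj : injective q.
  move=> v w /(congr1 (fun x => x.1)) /= e.
  have [e1|ne] := eqVneq (p v).1 (p w).1.
    move: e; rewrite e1 => /addrI /(mulfI (lt0r_neq0 t0)) /eqP.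
    by rewrite eqr_nat /k => /eqP/ord_inj/enum_rank_inj.
  have := gle v w ne.
  have -> : (p v).1 - (p w).1 = t * (k w)%:R - t * (k v)%:R.
    by lra.
  have := tk v; have := tk w; move=> /andP [h1 h2] /andP [h3 h4].
  have hg : Num.min d g <= g by rewrite ge_min lexx orbT.
  by move=> hle; case: (close_contra h1 (lt_le_trans h2 hg) h3 (lt_le_trans h4 hg) hle).
set P : {fset point R} := seq_fset tt (map q (enum V)).
have qP v : q v \in P by rewrite seq_fsetE map_f // mem_enum.
have cardP : #|` P| = #|V|.
  rewrite size_seq_fset undup_id; last by rewrite map_inj_uniq ?enum_uniq.
  by rewrite size_map cardE.
apply: (Hf P cardP).
pose f (v : V) : P := FSetSub (qP v).
exists f; split.
  by move=> v w /(congr1 val) /= /qinj.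
move=> e eE.
have [x [y [z [ee ht]]]] := Hp e eE.
have := HE e eE; rewrite ee => /card3_distinct [nxy nyz nxz].
have finj : injective f by move=> v w /(congr1 val) /= /qinj.
exists (f x), (f y), (f z); split.
- by rewrite (inj_eq finj).
- by rewrite (inj_eq finj).
- by rewrite (inj_eq finj).
- by rewrite !imsetU !imset_set1.
exists (p x), (p y), (p z); split=> //.
have dq v : dist (val (f v)) (p v) <= eps * Num.min a (Num.min b c).
  rewrite /= /dist /q /=.
  have -> : (p v).1 + t * (k v)%:R - (p v).1 = t * (k v)%:R by ring.
  rewrite subrr expr0n /= addr0 sqrtr_sqr ger0_norm; last by case/andP: (tk v).
  have := tk v; case/andP => _ h; apply/ltW; apply: lt_le_trans h _.
  by rewrite ge_min lexx.
by split; [|split]; apply: dq.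
Qed.

Lemma card3P (V : finType) (e : {set V}) :
  #|e| = 3%N -> exists x y z, e = [set x; y; z].
Proof.
move=> h.
have : (0 < #|e|)%N by rewrite h.
rewrite card_gt0 => /set0Pn [x xe].
have : #|e :\ x| == 2%N by move: h; rewrite (cardsD1 x) xe add1n => -[->].
case/cards2P => y [z [_ eyz]].
exists x, y, z; rewrite -(setD1K xe) eyz.
by rewrite setUA.
Qed.

Lemma dist0 {R : realType} (p : point R) : dist p p = 0.
Proof. by rewrite /dist !subrr expr0n /= addr0 sqrtr0. Qed.

Lemma atri_pair {R : realType} (a b c r : R) (X Y Z U W : point R) :
  0 <= a -> 0 <= b -> 0 <= c -> 0 <= r -> atri a b c r X Y Z ->
  U \in [:: X; Y; Z] -> W \in [:: X; Y; Z] -> dist U W <= a + b + c + r.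
Proof.
move=> a0 b0 c0 r0 h.
have hb : forall A B C, acong a b c r A B C ->
    [/\ dist A B <= a + b + c + r, dist B C <= a + b + c + r & dist C A <= a + b + c + r].
  move=> A B C [h1 [h2 h3]].
  move: h1 h2 h3; rewrite !ler_norml => /andP [_ h1] /andP [_ h2] /andP [_ h3].
  split; lra.
have [hXY hYZ hZX] : [/\ dist X Y <= a + b + c + r, dist Y Z <= a + b + c + r
      & dist Z X <= a + b + c + r].
  case: h => [h|[h|[h|[h|[h|h]]]]]; have [h1 h2 h3] := hb _ _ _ h;
    rewrite ?(dist_sym X Y) ?(dist_sym Y Z) ?(dist_sym Z X) in h1 h2 h3 *;
    split => //; rewrite ?(dist_sym X Y) ?(dist_sym Y Z) ?(dist_sym Z X) //.
have hd : forall P : point R, dist P P <= a + b + c + r by move=> P; rewrite dist0; lra.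
rewrite !inE => /or3P [] /eqP -> /or3P [] /eqP ->;
  rewrite ?hd // ?hXY ?hYZ ?hZX // dist_sym ?hXY ?hYZ ?hZX //.
Qed.

Lemma js_lem (i n : nat) : (1 <= i)%N -> (i < n)%N -> (3 <= n)%N -> (2 <= maxn i 2 < n)%N.
Proof. lia. Qed.

Lemma idx_lem (i X Y Z : nat) : (1 <= i)%N -> (X <= maxn i 2)%N -> (Y <= maxn i 2)%N ->
  (Z <= maxn i 2)%N -> X <> Y -> Y <> Z -> X <> Z ->
  (X = maxn i 2 \/ Y = maxn i 2 \/ Z = maxn i 2) ->
  (X = i \/ Y = i \/ Z = i) /\ (X < i \/ Y < i \/ Z < i)%N.
Proof. lia. Qed.

Lemma exact_forb (R : realType) (a b c : R) (V : finType) (E : {set {set V}})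
  (Ha : 0 < a) (Hb : 0 < b) (Hc : 0 < c)
  (HE : forall e, e \in E -> #|e| = 3%N)
  (Hdense : dense E) :
  exactly_forbidden a b c E -> forbidden a b c E.
Proof.
move=> EF; apply: NNPP => NF; apply: EF.
have [E0|[e0 e0E]] := set_0Vmem E.
  by exists (fun _ => (0, 0)) => e; rewrite E0 inE.
have [x0 _] : exists x0 : V, True.
  by have [x [_ [_ _]]] := card3P (HE e0 e0E); exists x.
have labP : forall e : {set V}, exists t : V * V * V, e \in E ->
    [/\ e = [set t.1.1; t.1.2; t.2], t.1.1 != t.1.2, t.1.2 != t.2 & t.1.1 != t.2].
  move=> e; case: (boolP (e \in E)) => eE; last by exists (x0, x0, x0).
  have [x [y [z ee]]] := card3P (HE e eE).
  exists (x, y, z) => _ /=.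
  by have := HE e eE; rewrite ee => /card3_distinct [? ? ?]; split.
case: (boolp.choice labP) => lab labH.
set m := Num.min a (Num.min b c).
have m0 : 0 < m by rewrite /m !lt_min Ha Hb Hc.
have Hn : forall n : nat, exists G : V -> point R, forall e, e \in E ->
    eps_cong a b c (n.+1%:R^-1) (G (lab e).1.1) (G (lab e).1.2) (G (lab e).2).
  move=> n; apply: NNPP => HG; apply: NF.
  exists (n.+1%:R^-1); split; first by rewrite invr_gt0 ltr0Sn.
  move=> P cardP [f [finj Hfe]]; apply: HG.
  exists (fun v => val (f v)) => e eE.
  have [p' [q' [r' [n1 n2 n3 ee epc]]]] := Hfe e eE.
  have := labH e eE; case: (lab e) => [[x y] z] /= [ex nxy nyz nxz].
  have memf v : v \in e -> f v \in [:: p'; q'; r'].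
    by move=> ve; have := imset_f f ve; rewrite ee !inE => /orP [/orP [] | ] ->; rewrite ?orbT.
  apply: (@perm3 _ (fun u v w : P => eps_cong a b c n.+1%:R^-1 (val u) (val v) (val w))
     _ _ p' q' r') => //.
  - by move=> ? ? ?; apply: eps_swap12.
  - by move=> ? ? ?; apply: eps_swap23.
  - by rewrite (inj_eq finj).
  - by rewrite (inj_eq finj).
  - by rewrite (inj_eq finj).
  - by apply: memf; rewrite ex !inE eqxx.
  - by apply: memf; rewrite ex !inE eqxx orbT.
  - by apply: memf; rewrite ex !inE eqxx !orbT.
case: (boolp.choice Hn) => G HG.
have [s [us alls Hd]] := Hdense.
set s0 := nth x0 s 0.
pose G' n v := tr (G n s0) (G n v).
have HG' n e : e \in E -> eps_cong a b c n.+1%:R^-1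
    (G' n (lab e).1.1) (G' n (lab e).1.2) (G' n (lab e).2).
  by move=> eE; apply: eps_tr; apply: HG.
have G's0 n : G' n s0 = (0, 0) by rewrite /G' /tr !subrr.
set K := 3 * (a + b + c).
have K0 : 0 <= K by rewrite /K; lra.
have atK n e : e \in E -> forall u w, u \in [:: (lab e).1.1; (lab e).1.2; (lab e).2] ->
    w \in [:: (lab e).1.1; (lab e).1.2; (lab e).2] -> dist (G' n u) (G' n w) <= K.
  move=> eE u w hu hw.
  have hr : n.+1%:R^-1 * m <= a.
    have h1 : n.+1%:R^-1 <= 1 :> R by rewrite invf_le1 ?ltr0Sn // ler1n.
    have h2 : m <= a by rewrite /m ge_min lexx.
    have h3 : 0 <= n.+1%:R^-1 :> R by rewrite invr_ge0 ler0n.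
    apply: le_trans h2; rewrite -[X in _ <= X]mul1r; apply: ler_wpM2r => //; exact: ltW.
  have h0 : 0 <= 2 * (n.+1%:R^-1 * m).
    by rewrite mulr_ge0 // mulr_ge0 ?invr_ge0 ?ler0n // ltW.
  apply: le_trans (atri_pair (ltW Ha) (ltW Hb) (ltW Hc) h0 (eps_cong_atri (HG' n e eE))
      (map_f (G' n) hu) (map_f (G' n) hw)) _.
  rewrite /K; move: (n.+1%:R^-1 * m) hr => t ht; lra.
have size3 : (3 <= size s)%N.
  have := HE e0 e0E; have : (#|e0| <= #|s|)%N.
    by apply: subset_leq_card; apply/subsetP => v _; exact: alls.
  have := card_size s; move=> h1 h2 h3; rewrite -h3; exact: leq_trans h2 h1.
have nthix v : nth x0 s (index v s) = v := nth_index x0 (alls v).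
have ixlt v : (index v s < size s)%N by rewrite index_mem.
have ixinj v w : index v s = index w s -> v = w.
  by move=> h; rewrite -(nthix v) h nthix.
have step : forall i, (1 <= i < size s)%N -> exists e, e \in E /\
    exists u w, [/\ u \in [:: (lab e).1.1; (lab e).1.2; (lab e).2],
      w \in [:: (lab e).1.1; (lab e).1.2; (lab e).2],
      nth x0 s i = u & (index w s < i)%N].
  move=> i /andP [i1 isz].
  have js : (2 <= maxn i 2 < size s)%N by apply: js_lem.
  have [e eE [hj hsub]] := Hd x0 (maxn i 2) js.
  exists e; split => //.
  have le_j v : v \in e -> (index v s <= maxn i 2)%N.
    by move=> ve; have := subsetP hsub v ve; rewrite inE.
  have := labH e eE; case: (lab e) => [[x y] z] /= [ex nxy nyz nxz].
  have xj : (index x s <= maxn i 2)%N by apply: le_j; rewrite ex !inE eqxx.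
  have yj : (index y s <= maxn i 2)%N by apply: le_j; rewrite ex !inE eqxx orbT.
  have zj : (index z s <= maxn i 2)%N by apply: le_j; rewrite ex !inE eqxx !orbT.
  have ixy : index x s <> index y s by move/ixinj => e1; rewrite e1 eqxx in nxy.
  have iyz : index y s <> index z s by move/ixinj => e1; rewrite e1 eqxx in nyz.
  have ixz : index x s <> index z s by move/ixinj => e1; rewrite e1 eqxx in nxz.
  have hjj : index (nth x0 s (maxn i 2)) s = maxn i 2.
    by apply: index_uniq; case/andP: js.
  have hj3 : index x s = maxn i 2 \/ index y s = maxn i 2 \/ index z s = maxn i 2.
    move: hj; rewrite ex !inE => /orP [/orP [] | ] /eqP e1; rewrite -e1; tauto.
  have [hi hw] := idx_lem i1 xj yj zj ixy iyz ixz hj3.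
  have [u hu ui] : exists2 u, u \in [:: x; y; z] & index u s = i.
    case: hi => [h|[h|h]]; [exists x|exists y|exists z]; rewrite // !inE eqxx ?orbT //.
  have [w hw' wi] : exists2 w, w \in [:: x; y; z] & (index w s < i)%N.
    case: hw => [h|[h|h]]; [exists x|exists y|exists z]; rewrite // !inE eqxx ?orbT //.
  by exists u, w; split => //; rewrite -ui nthix.
have bound : forall n i, (i < size s)%N ->
    `|(G' n (nth x0 s i)).1| <= i%:R * K /\ `|(G' n (nth x0 s i)).2| <= i%:R * K.
  move=> n; elim/ltn_ind => i IH isz.
  case: i IH isz => [|i] IH isz.
    by rewrite -/s0 G's0 /= normr0 mul0r.
  have [|e [eE [u [w [hu hw eu iw]]]]] := step i.+1; first by rewrite isz.
  have := IH (index w s) iw (ixlt w); rewrite nthix => -[h1 h2].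
  have dK := atK n e eE u w hu hw.
  have iwK : (index w s)%:R * K <= i%:R * K by rewrite ler_wpM2r // ler_nat -ltnS.
  rewrite eu -natr1 mulrDl mul1r.
  have c1 := coord1_le (G' n u) (G' n w).
  have c2 := coord2_le (G' n u) (G' n w).
  have t1 := ler_normD ((G' n u).1 - (G' n w).1) (G' n w).1.
  have t2 := ler_normD ((G' n u).2 - (G' n w).2) (G' n w).2.
  rewrite subrK in t1; rewrite subrK in t2.
  split; lra.
set M := (size s)%:R * K.
have Mb n v : `|(G' n v).1| <= M /\ `|(G' n v).2| <= M.
  have := bound n (index v s) (ixlt v); rewrite nthix => -[h1 h2].
  have : (index v s)%:R * K <= M by rewrite /M ler_wpM2r // ler_nat ltnW.
  by move=> h; split; apply: le_trans h.
have [phi [l [hphi hl]]] := @bwN R (V * bool)%type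
  (fun vb n => if vb.2 then (G' n vb.1).1 else (G' n vb.1).2) M
  (fun vb n => if vb.2 as b return `|(if b then (G' n vb.1).1 else (G' n vb.1).2)| <= M
     then (Mb n vb.1).1 else (Mb n vb.1).2).
exists (fun v => (l (v, true), l (v, false))) => e eE.
exists (lab e).1.1, (lab e).1.2, (lab e).2; split; first by case: (labH e eE).
apply: atri_tri => r r0.
set rho := r / 8.
have rho0 : 0 < rho by rewrite /rho divr_gt0.
have [N1 HN1] := hl rho rho0.
set n := maxn N1 (Num.Def.archi_bound (4 * m / r)).
set n' := phi n.
have An := eps_cong_atri (HG' n' e eE).
have dv v : dist (l (v, true), l (v, false)) (G' n' v) <= 2 * rho.
  apply: le_trans (dist_le_coords _ _) _.
  have h1 := HN1 n (leq_maxl _ _) (v, true).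
  have h2 := HN1 n (leq_maxl _ _) (v, false).
  rewrite /= distrC in h1; rewrite /= distrC in h2.
  rewrite /n' /=; lra.
have := atri_move An (dv _) (dv _) (dv _).
apply: atri_mono.
have hN : 4 * m / r < n'.+1%:R.
  have h0 : 0 <= 4 * m / r by rewrite divr_ge0 ?mulr_ge0 // ltW.
  apply: lt_le_trans (archi_boundP h0) _.
  by rewrite ler_nat /n' (leq_trans (leq_maxr _ _) (leq_trans (hphi n) (leqnSn _))).
have Npos : 0 < n'.+1%:R :> R by apply: ltr0Sn.
have hq : n'.+1%:R^-1 * m <= r / 4.
  rewrite mulrC -/(m / n'.+1%:R) ler_pdivrMr //.
  move: hN; rewrite ltr_pdivrMr // => hN.
  move: (n'.+1%:R) hN => N' hN; nra.
rewrite /rho; move: (n'.+1%:R^-1 * m) hq => t ht; lra.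
Qed.

Unset Implicit Arguments.

Theorem lemma2p1 (R : realType) (a b c : R) (V : finType) (E : {set {set V}})
  (Ha : 0 < a) (Hb : 0 < b) (Hc : 0 < c)
  (Hab : c < a + b) (Hbc : a < b + c) (Hca : b < c + a)
  (HE : forall e, e \in E -> #|e| = 3%N)
  (Hdense : dense E) :
  forbidden a b c E <-> exactly_forbidden a b c E.
Proof.
split.
- exact: forb_exact Ha Hb Hc HE.
- exact: exact_forb Ha Hb Hc HE Hdense.
Qed.
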